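(* Let $L\ge1$, $\boldsymbol{W}\in\mathbb{R}^{n\times d}$, $\boldsymbol{\alpha}_\ell\in\mathbb{R}^n$ ($\ell=1,\dots,L$), $\boldsymbol{\beta}_\ell\in\mathbb{R}^n$ and $\boldsymbol{b}_\ell\in\mathbb{R}^n$ ($\ell=0,\dots,L-1$), $\boldsymbol{b}_L\in\mathbb{R}^d$, and let $\sigma_1,\dots,\sigma_L:\mathbb{R}^n\to\mathbb{R}^n$ be differentiable elementwise activations. Define $$\boldsymbol{z}_0=\boldsymbol{\beta}_0\odot\boldsymbol{W}\boldsymbol{x}+\boldsymbol{b}_0,\qquad \boldsymbol{z}_\ell=\boldsymbol{\beta}_\ell\odot\boldsymbol{W}\boldsymbol{x}+\boldsymbol{\alpha}_\ell\odot\sigma_\ell(\boldsymbol{z}_{\ell-1})+\boldsymbol{b}_\ell\ (1\le\ell\le L-1),$$ $$\mathrm{GradNetC}(\boldsymbol{x})=\boldsymbol{W}^\top[\boldsymbol{\alpha}_L\odot\sigma_L(\boldsymbol{z}_{L-1})]+\boldsymbol{b}_L .$$ Then $\mathrm{GradNetC}=\nabla F$ for some $F\in C^1(\mathbb{R}^d)$, i.e. it is a GradNet.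
   Context: $\odot$ is the entrywise (Hadamard) product. An elementwise activation $\sigma:\mathbb{R}^n\to\mathbb{R}^n$ has the form $\sigma(\boldsymbol{z})=(s_1(z_1),\dots,s_n(z_n))$ with scalar functions $s_j$. A GradNet is a function $f:\mathbb{R}^d\to\mathbb{R}^d$ with $f=\nabla F$ for some continuously differentiable $F:\mathbb{R}^d\to\mathbb{R}$. *)

(* Defs.v *)
From HB Require Import structures.
From mathcomp Require Import all_boot all_order all_algebra.
From mathcomp Require Import all_classical all_reals all_analysis.
Set Implicit Arguments. Unset Strict Implicit. Unset Printing Implicit Defensive.
Import Order.TTheory GRing.Theory Num.Theory.
Import numFieldNormedType.Exports.
Local Open Scope ring_scope.

Definition hadamard (R : realType) (k : nat) (u v : 'cV[R]_k) : 'cV[R]_k :=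
  \col_i (u i 0 * v i 0).

Definition elementwise (R : realType) (k : nat) (s : 'I_k -> R -> R)
  (z : 'cV[R]_k) : 'cV[R]_k := \col_j s j (z j 0).

Definition gradient (R : realType) (d : nat) (F : 'cV[R]_d -> R)
  (x : 'cV[R]_d) : 'cV[R]_d :=
  \col_i ('d F x) (delta_mx i 0).

Definition C1 (R : realType) (d : nat) (F : 'cV[R]_d -> R) : Prop :=
  (forall x, differentiable F x) /\ continuous (gradient F).

Definition is_GradNet (R : realType) (d : nat) (f : 'cV[R]_d -> 'cV[R]_d)
  : Prop :=
  exists F : 'cV[R]_d -> R, C1 F /\ gradient F = f.

Fixpoint zlayer (R : realType) (n d : nat) (W : 'M[R]_(n, d))
  (alpha beta b : nat -> 'cV[R]_n) (sigma : nat -> 'I_n -> R -> R)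
  (l : nat) (x : 'cV[R]_d) : 'cV[R]_n :=
  match l with
  | 0 => hadamard (beta 0%N) (W *m x) + b 0%N
  | l'.+1 => hadamard (beta l) (W *m x)
             + hadamard (alpha l)
                 (elementwise (sigma l) (zlayer W alpha beta b sigma l' x))
             + b l
  end.

Definition GradNetC (R : realType) (n d L : nat) (W : 'M[R]_(n, d))
  (alpha beta b : nat -> 'cV[R]_n) (bL : 'cV[R]_d)
  (sigma : nat -> 'I_n -> R -> R) (x : 'cV[R]_d) : 'cV[R]_d :=
  W^T *m hadamard (alpha L)
           (elementwise (sigma L) (zlayer W alpha beta b sigma L.-1 x)) + bL.

(* Main.v *)
Require Import Defs.
From HB Require Import structures.
From mathcomp Require Import all_boot all_order all_algebra.
From mathcomp Require Import all_classical all_reals all_analysis.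
Import Order.TTheory GRing.Theory Num.Theory.
Import numFieldNormedType.Exports.
Local Open Scope ring_scope.
Local Open Scope classical_set_scope.

Section Prim.
Variable R : realType.
Notation mu := (@lebesgue_measure R).
Variable f : R -> R.

Definition Pint (a x : R) : R := (\int[mu]_(t in [set` `[a, x]]) (f t))%R.
Local Notation P := Pint.
Definition prim (x : R) := P (Num.min x 0 - 1) x - P (Num.min x 0 - 1) 0.
Local Notation H := prim.
Hypothesis fc : continuous f.

Let intf (a b : R) : mu.-integrable `[a, b] (EFin \o f).
Proof.
apply: (@continuous_compact_integrable R f); first exact: segment_compact.
exact: continuous_subspaceT.
Qed.

Let Padd a c x : a <= c -> c <= x -> P a x = P a c + P c x.
Proof.
move=> ac cx.
have := @Rintegral_itvB R f (BLeft a) (BRight x) c (intf a x).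
rewrite !bnd_simp => /(_ ac cx) H.
have E : P a x - P a c = P c x.
  rewrite /P H Rintegral_itv_obnd_cbnd //.
  apply: integrableS (intf c x) => //.
  by apply: subset_itvr; rewrite bnd_simp.
by rewrite -E addrCA subrr addr0.
Qed.

Let Pinv a a' x : a <= a' -> a' <= x -> a' <= 0 -> P a x - P a 0 = P a' x - P a' 0.
Proof.
move=> aa' a'x a'0; rewrite (Padd _ _ _ aa' a'x) (Padd _ _ _ aa' a'0).
by rewrite opprD addrACA subrr add0r.
Qed.

Let Hrep a x : a <= Num.min x 0 -> H x = P a x - P a 0.
Proof.
rewrite le_min => /andP[ax a0].
rewrite /H.
set m := Num.min x 0 - 1.
have : m <= Num.min x 0 by rewrite /m lerBlDr lerDl.
rewrite le_min => /andP[mx m0].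
have [am|ma] := leP a m.
  by apply/esym; apply: Pinv.
by apply: Pinv => //; exact: ltW.
Qed.

Lemma prim_der x : derivable H x 1 /\ H^`() x = f x.
Proof.
set a := Num.min x 0 - 1.
have a0 : a <= Num.min x 0 by rewrite /a lerBlDr lerDl.
have ax : a < x.
  apply: (@lt_le_trans _ _ (Num.min x 0)); first by rewrite /a ltrBlDr ltrDl.
  by rewrite ge_min lexx.
have x1 : x < x + 1 by rewrite ltrDl.
have [d1 d2] := @continuous_FTC1_closed R f a x (x + 1) x1 (intf a (x + 1)) ax (fc x).
pose G := (fun y => P a y) - cst (P a 0).
have nE : \forall y \near x, G y = H y.
  near=> y.
  rewrite (@Hrep a y) //.
  rewrite le_min; apply/andP; split.
    by apply: ltW; near: y; exact: lt_nbhsr.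
  by move: a0; rewrite le_min => /andP[].
have dG : derivable G x 1.
  by apply: (@derivableB _ _ _ (fun y => P a y) (cst (P a 0))); [exact: d1|exact: derivable_cst].
split; first exact: near_eq_derivable nE dG.
have e1 : 'D_1 G x = 'D_1 H x := @near_eq_derive _ _ _ G H x 1 nE.
have e2 := @deriveB _ _ _ (fun y => P a y) (cst (P a 0)) x 1 d1 (derivable_cst _ _ _).
rewrite derive1E -e1 /G e2 derive_cst subr0 -derive1E.
exact: d2.
Unshelve. all: by end_near.
Qed.

End Prim.

Lemma mx_cont (R : realType) (T : topologicalType) m n (f : T -> 'M[R]_(m, n)) :
  (forall i j, continuous (fun x => f x i j)) -> continuous f.
Proof.
move=> fc x A /nbhs_ballP[e /= e0 eA].
have : \forall y \near x, forall ij : 'I_m * 'I_n, ball (f x ij.1 ij.2) e (f y ij.1 ij.2).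
  apply: filter_forall => -[i j] /=.
  have := fc i j x. move=> /(_ (ball (f x i j) e)) /=; apply.
  exact: nbhsx_ballx.
apply: filterS => y H; apply: eA; split => // i j.
exact: (H (i, j)).
Qed.

Arguments prim {R} f x.
Arguments prim_der {R} f fc x.
Set Implicit Arguments. Unset Strict Implicit.
Section Aux.
Variable R : realType.

Lemma is_diff_sum (V W : normedModType R) n (f df : 'I_n -> V -> W) x :
  (forall i, is_diff x (f i) (df i)) ->
  is_diff x (fun y => \sum_(i < n) f i y) (fun v => \sum_(i < n) df i v).
Proof.
elim: n f df => [|n IH] f df Hf.
  have -> : (fun y => \sum_(i < 0) f i y) = cst 0.
    by apply/funext => y; rewrite big_ord0.
  have -> : (fun v => \sum_(i < 0) df i v) = 0.
    by apply/funext => y; rewrite big_ord0.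
  exact: is_diff_cst.
have -> : (fun y => \sum_(i < n.+1) f i y) =
   (fun y => \sum_(i < n) f (widen_ord (leqnSn n) i) y) + f ord_max.
  by apply/funext => y; rewrite big_ord_recr.
have -> : (fun y => \sum_(i < n.+1) df i y) =
   (fun y => \sum_(i < n) df (widen_ord (leqnSn n) i) y) + df ord_max.
  by apply/funext => y; rewrite big_ord_recr.
exact: (is_diffD (IH _ _ (fun i => Hf _)) (Hf ord_max)).
Qed.

Lemma cont_sum (T : topologicalType) n (f : 'I_n -> T -> R) :
  (forall i, continuous (f i)) -> continuous (fun y => \sum_(i < n) f i y).
Proof.
elim: n f => [|n IH] f Hf.
  have -> : (fun y => \sum_(i < 0) f i y) = cst 0.
    by apply/funext => y; rewrite big_ord0.
  exact: cst_continuous.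
have -> : (fun y => \sum_(i < n.+1) f i y) =
   (fun y => \sum_(i < n) f (widen_ord (leqnSn n) i) y) + f ord_max.
  by apply/funext => y; rewrite big_ord_recr.
move=> x; apply: continuousD; last exact: Hf.
exact: IH.
Qed.

Definition lf d (c : 'I_d -> R) (y : 'cV[R]_d) : R := \sum_(k < d) c k * y k 0.

Lemma lf_linear d (c : 'I_d -> R) : linear (lf c).
Proof.
move=> a u v; rewrite /lf scaler_sumr -big_split /=; apply: eq_bigr => k _.
by rewrite !mxE mulrDr mulrCA.
Qed.

Lemma lf_cont d (c : 'I_d -> R) : continuous (lf c).
Proof.
rewrite /lf; apply: cont_sum => k x.
apply: continuousM; first exact: cst_continuous.
exact: coord_continuous.
Qed.

Lemma is_diff_lf d (c : 'I_d -> R) x : is_diff x (lf c) (lf c).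
Proof.
pose lM := GRing.isLinear.Build _ _ _ _ _ (lf_linear c).
pose lL : {linear 'cV[R]_d -> R} := HB.pack (lf c) lM.
have -> : lf c = lL by [].
apply: DiffDef; first exact/linear_differentiable/lf_cont.
by rewrite diff_lin //; exact: lf_cont.
Qed.

Lemma lf_delta d (c : 'I_d -> R) i : lf c (delta_mx i 0) = c i.
Proof.
rewrite /lf (bigD1 i) //= big1 ?addr0.
  by rewrite mxE !eqxx mulr1.
by move=> k /negbTE ki; rewrite mxE ki mulr0.
Qed.

Lemma is_diff_prim (h : R -> R) (t : R) : continuous h ->
  is_diff t (prim h) (fun u : R => u *: h t).
Proof.
move=> hc; have [d1 d2] := prim_der h hc t.
have dd : differentiable (prim h) t by apply/derivable1_diffP.
apply: DiffDef => //.
by rewrite diff1E // d2.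
Qed.

End Aux.

Section Main.
Variables (R : realType) (n d L : nat) (W : 'M[R]_(n, d))
  (alpha beta b : nat -> 'cV[R]_n) (bL : 'cV[R]_d)
  (sigma : nat -> 'I_n -> R -> R).

Fixpoint gs (l : nat) (j : 'I_n) (t : R) : R :=
  match l with
  | 0 => beta 0%N j 0 * t + b 0%N j 0
  | l'.+1 => beta l j 0 * t + alpha l j 0 * sigma l j (gs l' j t) + b l j 0
  end.

Lemma zlayerE l x j : zlayer W alpha beta b sigma l x j 0 = gs l j ((W *m x) j 0).
Proof.
elim: l => [|l IH] /=; first by rewrite /hadamard !mxE.
move: IH; rewrite /hadamard /elementwise !mxE => ->.
by [].
Qed.

Lemma gs_cont l j : (forall l', (1 <= l' <= l)%N -> continuous (sigma l' j)) ->
  continuous (gs l j).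
Proof.
elim: l => [|l IH] Hs /=.
  move=> t; apply: continuousD; last exact: cst_continuous.
  apply: continuousM; first exact: cst_continuous.
  exact: cvg_id.
have -> : (fun t => beta l.+1 j 0 * t + alpha l.+1 j 0 * sigma l.+1 j (gs l j t) + b l.+1 j 0)
  = (fun t => beta l.+1 j 0 * t) + (fun t => alpha l.+1 j 0 * sigma l.+1 j (gs l j t))
    + cst (b l.+1 j 0) by [].
move=> t; apply: continuousD; last exact: cst_continuous.
apply: continuousD.
  apply: continuousM; first exact: cst_continuous.
  exact: cvg_id.
apply: continuousM; first exact: cst_continuous.
apply: (@continuous_comp _ _ _ (gs l j) (sigma l.+1 j)).
  by apply: IH => l' /andP[l1 l2]; apply: Hs; rewrite l1 /= (leq_trans l2).
by apply: Hs; rewrite /= leqnn.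
Qed.

Definition hf (j : 'I_n) (t : R) : R := alpha L j 0 * sigma L j (gs L.-1 j t).

Definition Fpot (x : 'cV[R]_d) : R :=
  \sum_(j < n) prim (hf j) (lf (fun k => W j k) x) + lf (fun k => bL k 0) x.

Hypothesis L1 : (1 <= L)%N.
Hypothesis sdiff : forall l j t, (1 <= l <= L)%N -> differentiable (sigma l j) t.

Lemma scont l j : (1 <= l <= L)%N -> continuous (sigma l j).
Proof.
by move=> lL t; apply: differentiable_continuous; exact: sdiff.
Qed.

Lemma hf_cont j : continuous (hf j).
Proof.
have gc : continuous (gs L.-1 j).
  apply: gs_cont => l' /andP[l1 l2]; apply: scont.
  by rewrite l1 /= (leq_trans l2) // leq_pred.
move=> t; apply: continuousM; first exact: cst_continuous.
apply: (@continuous_comp _ _ _ (gs L.-1 j) (sigma L j)); first exact: gc.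
by apply: scont; rewrite L1 leqnn.
Qed.

Lemma zlayerE' l x j :
  zlayer W alpha beta b sigma l x j 0 = gs l j (lf (fun k => W j k) x).
Proof. by rewrite zlayerE mxE. Qed.

Lemma GradE x i : GradNetC L W alpha beta b bL sigma x i 0 =
  \sum_(j < n) W j i * hf j (lf (fun k => W j k) x) + bL i 0.
Proof.
rewrite /GradNetC /hadamard /elementwise !mxE; congr (_ + _).
apply: eq_bigr => j _; rewrite !mxE zlayerE' //.
Qed.

Lemma Fpot_diff x : is_diff x Fpot
  (fun v => \sum_(j < n) lf (fun k => W j k) v *: hf j (lf (fun k => W j k) x)
            + lf (fun k => bL k 0) v).
Proof.
have -> : Fpot = (fun y => \sum_(j < n) prim (hf j) (lf (fun k => W j k) y))
                 + lf (fun k => bL k 0) by [].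
have -> : (fun v => \sum_(j < n) lf (fun k => W j k) v *: hf j (lf (fun k => W j k) x)
            + lf (fun k => bL k 0) v) =
   (fun v => \sum_(j < n) lf (fun k => W j k) v *: hf j (lf (fun k => W j k) x))
            + lf (fun k => bL k 0) by [].
apply: is_diffD; last exact: is_diff_lf.
apply: is_diff_sum => j.
exact (is_diff_comp (is_diff_lf (fun k => W j k) x) (is_diff_prim _ (@hf_cont j))).
Qed.

Lemma gradient_Fpot : gradient Fpot = GradNetC L W alpha beta b bL sigma.
Proof.
apply/funext => x; apply/matrixP => i k; rewrite ord1 GradE /gradient mxE.
rewrite (@diff_val _ _ _ _ _ _ _ (Fpot_diff x)) lf_delta; congr (_ + _).
by apply: eq_bigr => j _; rewrite lf_delta.
Qed.

Lemma GradNetC_cont : continuous (GradNetC L W alpha beta b bL sigma).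
Proof.
apply: mx_cont => i k; rewrite ord1.
have -> : (fun x => GradNetC L W alpha beta b bL sigma x i 0) =
  (fun x => \sum_(j < n) W j i * hf j (lf (fun k => W j k) x)) + cst (bL i 0).
  by apply/funext => x; rewrite GradE.
move=> x; apply: continuousD; last exact: cst_continuous.
apply: cont_sum => j y.
have hc : {for y, continuous (hf j \o lf (fun k => W j k))}.
  apply: (@continuous_comp _ _ _ (lf (fun k => W j k)) (hf j)); first exact: lf_cont.
  exact: hf_cont.
exact (@continuousM R _ (cst (W j i)) (hf j \o lf (fun k => W j k)) y
  (@cst_continuous _ _ (W j i) y) hc).
Qed.

End Main.

Unset Implicit Arguments.

Theorem theorem8 (R : realType) (n d L : nat) (W : 'M[R]_(n, d))
  (alpha beta b : nat -> 'cV[R]_n) (bL : 'cV[R]_d)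
  (sigma : nat -> 'I_n -> R -> R) :
  (1 <= L)%N ->
  (forall l j t, (1 <= l <= L)%N -> differentiable (sigma l j) t) ->
  is_GradNet (GradNetC L W alpha beta b bL sigma).
Proof.
move=> L1 sd; exists (@Fpot R n d L W alpha beta b bL sigma).
have gF := @gradient_Fpot R n d L W alpha beta b bL sigma L1 sd.
split; last exact: gF.
split.
  move=> x; exact: (@ex_diff _ _ _ _ _ _ _ (@Fpot_diff R n d L W alpha beta b bL sigma L1 sd x)).
rewrite gF; exact: (@GradNetC_cont R n d L W alpha beta b bL sigma L1 sd).
Qed.
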